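(* Let $G$ be an edge-colored graph of order $n\geq 6$ such that $|CN(u)\cup CN(v)|\geq n-1$ for every pair of vertices $u$ and $v$ in $V(G)$. Then $G$ contains a rainbow $C_3$ unless $G$ is a rainbow $K_{\lceil n/2\rceil,\lfloor n/2\rfloor}$ (i.e. $G$ is a complete bipartite graph with parts of sizes $\lceil n/2\rceil,\lfloor n/2\rfloor$ all of whose edges have distinct colors).
   Context: An edge-colored graph is a finite simple graph $G$ with a map $C:E(G)\to\mathbb{N}$. For $v\in V(G)$, the color neighborhood $CN(v)$ is the set of colors assigned to edges incident to $v$. A subgraph is rainbow if all its edges have distinct colors; $C_3$ is a triangle. *)

(* Defs.v *)
From mathcomp Require Import all_boot.
Set Implicit Arguments. Unset Strict Implicit. Unset Printing Implicit Defensive.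

Definition simple_graph (T : finType) (e : rel T) : Prop :=
  (forall x y, e x y = e y x) /\ (forall x, ~~ e x x).

(* An edge coloring is given by a symmetric c : T -> T -> nat;
   only its values on edges matter. *)
Definition sym_coloring (T : finType) (c : T -> T -> nat) : Prop :=
  forall x y, c x y = c y x.

(* Color neighborhood CN(v), as a sequence (possibly with repetitions). *)
Definition CN (T : finType) (e : rel T) (c : T -> T -> nat) (v : T) : seq nat :=
  [seq c v u | u <- enum T & e v u].

Definition CN_union_card (T : finType) (e : rel T) (c : T -> T -> nat) (u v : T) : nat :=
  size (undup (CN e c u ++ CN e c v)).

Definition has_rainbow_C3 (T : finType) (e : rel T) (c : T -> T -> nat) : Prop :=
  exists x y z : T, [/\ e x y, e y z & e z x] /\
    [/\ c x y != c y z, c y z != c z x & c z x != c x y].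

Definition rainbow_graph (T : finType) (e : rel T) (c : T -> T -> nat) : Prop :=
  forall x y x' y', e x y -> e x' y' -> c x y = c x' y' ->
    (x = x' /\ y = y') \/ (x = y' /\ y = x').

(* G is the complete bipartite graph K_{ceil(n/2), floor(n/2)}, n = #|T|. *)
Definition is_balanced_complete_bipartite (T : finType) (e : rel T) : Prop :=
  exists A : {set T}, #|A| = #|T| - #|T| %/ 2 /\
    forall x y, e x y = ((x \in A) != (y \in A)).

(* Main.v *)
Require Import Defs.
From mathcomp Require Import all_boot zify.
From Stdlib Require Import Classical.
Set Implicit Arguments. Unset Strict Implicit. Unset Printing Implicit Defensive.

Lemma card_count (T : finType) (S : {set T}) : #|S| = count (mem S) (enum T).
Proof. by rewrite cardE /enum_mem size_filter count_filter; apply: eq_count => x; rewrite /= andbT. Qed.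

Lemma memCN (T : finType) (e : rel T) (c : T -> T -> nat) u col :
  reflect (exists t, e u t /\ col = c u t) (col \in CN e c u).
Proof.
apply: (iffP mapP) => [[t] | [t [et ->]]].
  by rewrite mem_filter mem_enum andbT => ht ->; exists t.
by exists t => //; rewrite mem_filter mem_enum et.
Qed.

Lemma sizeCN (T : finType) (e : rel T) (c : T -> T -> nat) u (S : {set T}) :
  (forall t, e u t = (t \in S)) -> size (CN e c u) = #|S|.
Proof.
move=> h; rewrite /CN size_map size_filter card_count; apply: eq_count => t; exact: h.
Qed.

Lemma size_undup_sub (s1 s2 : seq nat) : {subset s1 <= s2} -> size (undup s1) <= size (undup s2).
Proof.
move=> h; apply: uniq_leq_size; first exact: undup_uniq.
by move=> x; rewrite !mem_undup; apply: h.
Qed.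

Lemma uniq_map_inj (T : eqType) (f : T -> nat) s x y :
  uniq (map f s) -> x \in s -> y \in s -> f x = f y -> x = y.
Proof.
elim: s => [|h s IH] //= /andP[nh us]; rewrite !inE.
case/orP=> [/eqP->|xs]; case/orP=> [/eqP->|ys] // fe.
- by move: nh; rewrite fe (map_f f ys).
- by move: nh; rewrite -fe (map_f f xs).
- exact: IH.
Qed.

Definition gfun (T : finType) (e : rel T) (c : T -> T -> nat) u v w :=
  if e u w && (c u w != c u v) then c u w else c v w.

Lemma nrt (T : finType) (e : rel T) (c : T -> T -> nat) x y z :
  ~ has_rainbow_C3 e c -> e x y -> e y z -> e z x ->
  c x y != c y z -> c z x != c x y -> c y z = c z x.
Proof.
move=> NR exy eyz ezx n1 n3; case: (eqVneq (c y z) (c z x)) => // n2.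
by exfalso; apply: NR; exists x, y, z; split; split.
Qed.

Lemma edge_lemma (T : finType) (e : rel T) (c : T -> T -> nat) u v :
  simple_graph e -> sym_coloring c ->
  (forall u v : T, u != v -> #|T| - 1 <= CN_union_card e c u v) ->
  ~ has_rainbow_C3 e c -> e u v ->
  (forall w, w != u -> w != v -> (e u w && (c u w != c u v)) || (e v w && (c v w != c u v))) /\
  (forall w1 w2, w1 != u -> w1 != v -> w2 != u -> w2 != v ->
      gfun e c u v w1 = gfun e c u v w2 -> w1 = w2).
Proof.
move=> [esym eirr] csym Hn NR euv.
set a := c u v; set g := gfun e c u v.
pose P := fun w => [&& w != u, w != v & (e u w && (c u w != a)) || (e v w && (c v w != a))].
pose DP := [set w | P w]; pose DQ := [set w | (w != u) && (w != v)].
have uv : u != v by apply/eqP => h; move: (eirr u); rewrite {2}h euv.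
have cardQ : #|DQ| + 2 = #|T|.
  have -> : DQ = ~: [set u; v] by apply/setP => w; rewrite !inE negb_or.
  by rewrite -(cardsC [set u; v]) cards2 uv; lia.
have sub : {subset CN e c u ++ CN e c v <= a :: map g (enum DP)}.
  move=> col; rewrite mem_cat => /orP[] /memCN [t [et ->]]; rewrite inE.
  - case: (eqVneq t v) => [->|tv]; first by rewrite ?eqxx.
    case: (eqVneq (c u t) a) => [->|cta]; first by [].
    apply/orP; right.
    have -> : c u t = g t by rewrite /g /gfun et cta.
    apply: map_f; rewrite mem_enum inE /P tv et cta /= andbT.
    by apply/eqP => h; move: (eirr u); rewrite -{2}h et.
  - case: (eqVneq t u) => [->|tu]; first by rewrite (csym v u) ?eqxx.
    case: (eqVneq (c v t) a) => [->|cta]; first by rewrite ?eqxx.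
    apply/orP; right.
    have -> : c v t = g t.
      rewrite /g /gfun; case: ifP => // /andP[eut cut].
      have := @nrt _ e c u v t NR euv et; rewrite esym eut => /(_ isT).
      rewrite -/a eq_sym cta csym => /(_ isT).
      by move/(_ cut).
    apply: map_f; rewrite mem_enum inE /P tu et cta /= !orbT andbT.
    by apply/eqP => h; move: (eirr v); rewrite -{2}h et.
have H1 := Hn u v uv; rewrite /CN_union_card in H1.
have le1 := size_undup_sub sub.
have le2 : size (undup (a :: map g (enum DP))) <= (size (undup (map g (enum DP)))).+1.
  by rewrite /=; case: ifP.
have le3 : size (undup (map g (enum DP))) <= #|DP|.
  by rewrite cardE -(size_map g); apply: size_undup.
have le4 : #|DP| <= #|DQ|.
  by apply/subset_leq_card/subsetP => w; rewrite !inE => /and3P[-> ->].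
have eqPQ : DP == DQ.
  rewrite eqEcard; apply/andP; split; last by lia.
  by apply/subsetP => w; rewrite !inE => /and3P[-> ->].
have uq : uniq (map g (enum DP)).
  apply: (@leq_size_uniq _ (undup (map g (enum DP)))); first exact: undup_uniq.
    by move=> x; rewrite mem_undup.
  by rewrite size_map -cardE; lia.
split.
  move=> w wu wv; have : w \in DQ by rewrite inE wu wv.
  by rewrite -(eqP eqPQ) inE => /and3P[_ _].
move=> w1 w2 w1u w1v w2u w2v; apply: uniq_map_inj uq _ _;
  by rewrite mem_enum (eqP eqPQ) inE ?w1u ?w1v ?w2u ?w2v.
Qed.

Lemma mono_lemma (T : finType) (e : rel T) (c : T -> T -> nat) u y z t :
  simple_graph e -> sym_coloring c ->
  (forall u v : T, u != v -> #|T| - 1 <= CN_union_card e c u v) ->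
  ~ has_rainbow_C3 e c -> e u y -> e u z -> y != z -> c u y = c u z -> e u t ->
  c u t = c u y.
Proof.
move=> Hg Hc Hn NR euy euz yz cyz eut.
case: (eqVneq (c u t) (c u y)) => // ne; exfalso.
have [_ inj] := edge_lemma Hg Hc Hn NR eut.
have [_ eirr] := Hg.
have yu : y != u by apply/eqP => h; move: (eirr u); rewrite -{2}h euy.
have zu : z != u by apply/eqP => h; move: (eirr u); rewrite -{2}h euz.
have yt : y != t by apply/eqP => h; move: ne; rewrite h eqxx.
have zt : z != t by apply/eqP => h; move: ne; rewrite cyz -h eqxx.
have := inj y z yu yt zu zt; rewrite /gfun euy euz -cyz (eq_sym (c u y)) ne /= => /(_ erefl) yzE.
by rewrite yzE eqxx in yz.
Qed.

Lemma two_color (T : finType) (e : rel T) (c : T -> T -> nat) u x a d :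
  6 <= #|T| ->
  (forall u v : T, u != v -> #|T| - 1 <= CN_union_card e c u v) ->
  u != x -> (forall t, e u t -> c u t = a) -> (forall t, e x t -> c x t = d) -> False.
Proof.
move=> H6 Hn ux hu hx; have := Hn u x ux; rewrite /CN_union_card.
have : size (undup (CN e c u ++ CN e c x)) <= size [:: a; d].
  apply: uniq_leq_size; first exact: undup_uniq.
  move=> col; rewrite mem_undup mem_cat => /orP[] /memCN [t [et ->]].
    by rewrite (hu t et) inE eqxx.
  by rewrite (hx t et) !inE eqxx orbT.
rewrite /= => h1 h2; have h3 := leq_trans h2 h1; move: H6 h3; move: #|T| => m; lia.
Qed.

Lemma caseB (T : finType) (e : rel T) (c : T -> T -> nat) u y z :
  simple_graph e -> sym_coloring c -> 6 <= #|T| ->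
  (forall u v : T, u != v -> #|T| - 1 <= CN_union_card e c u v) ->
  ~ has_rainbow_C3 e c -> e u y -> e u z -> y != z -> c u y = c u z -> False.
Proof.
move=> Hg Hc H6 Hn NR euy euz yz cyz.
have [esym eirr] := Hg.
have monou : forall t, e u t -> c u t = c u y.
  by move=> t; apply: (mono_lemma Hg Hc Hn NR euy euz yz cyz).
have nb : forall v, e u v -> forall t, t != u -> t != v -> e v t && (c v t != c u y).
  move=> v euv t tu tv; have [p1 _] := edge_lemma Hg Hc Hn NR euv.
  move: (p1 t tu tv); rewrite (monou v euv); case eut: (e u t) => //=.
  by rewrite (monou t eut) eqxx.
have yu : y != u by apply/eqP => h; move: (eirr u); rewrite -{2}h euy.
have zu : z != u by apply/eqP => h; move: (eirr u); rewrite -{2}h euz.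
have [x xn] : exists x, x \in ~: [set u; y; z].
  apply/card_gt0P; have := cardsC [set u; y; z].
  have : #|[set u; y; z]| <= 3.
    rewrite -setUA cardsU1 cards2; case: (u \notin _); case: (y != z) => //.
  move: #|[set u; y; z]| #|~: [set u; y; z]| H6 => p q r; move: #|T| r => m; lia.
move: xn; rewrite !inE !negb_or => /andP[/andP[xu xy] xz].
have zy : z != y by rewrite eq_sym.
have /andP[eyz cyz'] := nb y euy z zu zy.
have /andP[eyx cyx] := nb y euy x xu xy.
have /andP[ezx czx] := nb z euz x xu xz.
apply NR; exists x, y, z; split; first by split; rewrite // esym.
split.
- rewrite Hc; apply/eqP => h.
  have := mono_lemma Hg Hc Hn NR eyx eyz xz h (_ : e y u); rewrite esym euy => /(_ isT).
  by rewrite Hc => hh; move: cyx; rewrite -hh eqxx.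
- rewrite Hc; apply/eqP => h.
  have ezy : e z y by rewrite esym.
  have ezu : e z u by rewrite esym.
  have yx : y != x by rewrite eq_sym.
  move: (mono_lemma Hg Hc Hn NR ezy ezx yx h ezu).
  by rewrite Hc (monou z euz) (Hc z y) => hh; move: cyz'; rewrite -hh eqxx.
- apply/eqP => h.
  have exz : e x z by rewrite esym.
  have exy : e x y by rewrite esym.
  have h' : c x z = c x y by rewrite -h Hc.
  have ux : u != x by rewrite eq_sym.
  apply: (@two_color _ e c u x (c u y) (c x z) H6 Hn ux monou) => t ext.
  exact: (mono_lemma Hg Hc Hn NR exz exy zy h' ext).
Qed.

Theorem theorem7 (T : finType) (e : rel T) (c : T -> T -> nat) :
  simple_graph e -> sym_coloring c ->
  6 <= #|T| ->
  (forall u v : T, u != v -> #|T| - 1 <= CN_union_card e c u v) ->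
  has_rainbow_C3 e c \/ (is_balanced_complete_bipartite e /\ rainbow_graph e c).
Proof.
move=> Hg Hc H6 Hn.
have [esy eirr] := Hg.
case: (classic (has_rainbow_C3 e c)) => [|NR]; [by left|right].
have prop : forall x y z, e x y -> e x z -> c x y = c x z -> y = z.
  move=> x y z exy exz cxy; apply/eqP; case: (eqVneq y z) => // yz.
  by exfalso; apply: (caseB Hg Hc H6 Hn NR exy exz yz cxy).
have irr : forall x y, e x y -> x != y.
  by move=> x y exy; apply/eqP => h; move: (eirr x); rewrite {2}h exy.
have tf : forall x y z, e x y -> e y z -> e z x -> False.
  move=> x y z exy eyz ezx; apply NR; exists x, y, z; split; first by split.
  split; apply/eqP => h.
  - have := prop y x z; rewrite -esy exy eyz Hc => /(_ isT isT h) xz.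
    by move: (irr _ _ ezx); rewrite xz eqxx.
  - have := prop z y x; rewrite -esy eyz ezx Hc => /(_ isT isT h) yx.
    by move: (irr _ _ exy); rewrite yx eqxx.
  - have := prop x z y; rewrite -esy ezx exy Hc => /(_ isT isT) .
    rewrite h => /(_ erefl) zy.
    by move: (irr _ _ eyz); rewrite zy eqxx.
have dom : forall p q t, e p q -> t != p -> t != q -> e p t || e q t.
  move=> p q t epq tp tq; have [p1 _] := edge_lemma Hg Hc Hn NR epq.
  by move: (p1 t tp tq); case: (e p t) => //=; case: (e q t).
have [u0 [v0 euv]] : exists u v, e u v.
  have [u _] : exists u, u \in T by apply/card_gt0P; move: #|T| H6 => m; lia.
  have [v] : exists v, v \in [set~ u] by apply/card_gt0P; rewrite cardsC1; move: #|T| H6 => m; lia.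
  rewrite !inE eq_sym => uv; have := Hn u v uv; rewrite /CN_union_card.
  case E: (CN e c u ++ CN e c v) => [|col s]; first by move: #|T| H6 => m; rewrite /=; lia.
  have : col \in CN e c u ++ CN e c v by rewrite E inE eqxx.
  rewrite mem_cat => /orP[] /memCN [t [et _]] _; [by exists u, t | by exists v, t].
pose A := [set x | e v0 x].
have notA : forall x, (x \notin A) = e u0 x.
  move=> x; rewrite inE; case ev: (e v0 x) => /=.
    by apply/Logic.eq_sym/negbTE/negP => eu; apply: (tf u0 v0 x) => //; rewrite esy.
  case: (eqVneq x u0) => [xu|xu]; first by move: ev; rewrite xu esy euv.
  case: (eqVneq x v0) => [->//|xv].
  by move: (dom u0 v0 x euv xu xv); rewrite ev orbF.
have key : forall x y, x \in A -> y \notin A -> e x y.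
  move=> x y xA yA; have ev : e v0 x by rewrite inE in xA.
  case: (eqVneq x u0) => [->|xu]; first by rewrite -notA.
  case: (eqVneq y v0) => [->|yv]; first by rewrite esy.
  have yx : y != x by apply/eqP => h; move: yA; rewrite h xA.
  have := dom v0 x y ev yv yx.
  by move: yA; rewrite inE => /negbTE ->.
have bip : forall x y, e x y = ((x \in A) != (y \in A)).
  move=> x y; case xA: (x \in A); case yA: (y \in A) => /=.
  - apply/negbTE/negP => exy; apply: (tf v0 x y) => //.
      by rewrite inE in xA.
    by rewrite esy; rewrite inE in yA.
  - by apply: key; rewrite ?yA.
  - by rewrite esy; apply: key; rewrite ?xA.
  - apply/negbTE/negP => exy; apply: (tf u0 x y) => //.
      by rewrite -notA xA.
    by rewrite esy -notA yA.
have sizeA : forall x, x \in A -> size (CN e c x) = #|~: A|.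
  move=> x xA; apply: sizeCN => t; by rewrite bip xA in_setC; case: (t \in A).
have sizeB : forall x, x \notin A -> size (CN e c x) = #|A|.
  move=> x xA; apply: sizeCN => t; rewrite bip (negbTE xA); by case: (t \in A).
have pA : 1 < #|A| -> #|T| - 1 <= 2 * #|~: A|.
  move/card_gt1P => [x [x' [xA x'A xx']]]; have := Hn x x' xx'.
  rewrite /CN_union_card => h; apply: (leq_trans h); apply: (leq_trans (size_undup _)).
  by rewrite size_cat sizeA // sizeA //; lia.
have pB : 1 < #|~: A| -> #|T| - 1 <= 2 * #|A|.
  move/card_gt1P => [x [x' [xA x'A xx']]]; have := Hn x x' xx'.
  rewrite /CN_union_card => h; apply: (leq_trans h); apply: (leq_trans (size_undup _)).
  rewrite inE in xA; rewrite inE in x'A.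
  by rewrite size_cat sizeB // sizeB //; lia.
have A0 : 0 < #|A| by apply/card_gt0P; exists u0; rewrite inE esy.
have B0 : 0 < #|~: A| by apply/card_gt0P; exists v0; rewrite inE notA.
have hC := cardsC A.
split.
  move: pA pB A0 B0 hC H6.
  case: (eqVneq #|A| (#|T| - #|T| %/ 2)) => hA.
    by move=> *; exists A; split.
  move=> pA pB A0 B0 hC H6.
  exists (~: A); split.
    move: pA pB A0 B0 hC H6 hA; move: #|A| #|~: A| #|T| => p q m; lia.
  by move=> x y; rewrite !in_setC bip; case: (x \in A); case: (y \in A).
move=> x y x' y' exy ex'y' cc.
case: (eqVneq x x') => [xx'|xx'].
  by left; split => //; subst x'; apply: prop exy ex'y' cc.
case: (eqVneq x y') => [xy'|xy'].
  right; split => //; subst y'; apply: prop exy _ _; first by rewrite esy.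
  by rewrite cc Hc.
case: (eqVneq y x') => [yx'|yx'].
  subst x'; exfalso; move/eqP: xy'; apply; apply: (prop y); first by rewrite esy.
    done.
  by rewrite Hc cc.
case: (eqVneq y y') => [yy'|yy'].
  subst y'; exfalso; move/eqP: xx'; apply; apply: (prop y); first by rewrite esy.
    by rewrite esy.
  by rewrite Hc cc Hc.
exfalso.
have := dom x' y' x ex'y' xx' xy' => /orP[ex'x|ey'x].
- have exx' : e x x' by rewrite esy.
  have [_ inj] := edge_lemma Hg Hc Hn NR exx'.
  have yx : y != x by rewrite eq_sym; apply: irr.
  have y'x : y' != x by rewrite eq_sym.
  have y'x' : y' != x' by rewrite eq_sym; apply: irr.
  have ne1 : c x y != c x x'.
    by apply/eqP => h; move: yx'; rewrite (prop _ _ _ exy exx' h) eqxx.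
  have exy'F : e x y' = false.
    by apply/negbTE/negP => exy'; apply: (tf x x' y') => //; rewrite esy.
  have := inj y y' yx yx' y'x y'x'; rewrite /gfun exy ne1 exy'F /= => /(_ cc) h.
  by move: yy'; rewrite h eqxx.
- have exy' : e x y' by rewrite esy.
  have [_ inj] := edge_lemma Hg Hc Hn NR exy'.
  have yx : y != x by rewrite eq_sym; apply: irr.
  have x'x : x' != x by rewrite eq_sym.
  have x'y' : x' != y' by apply: irr.
  have ne1 : c x y != c x y'.
    by apply/eqP => h; move: yy'; rewrite (prop _ _ _ exy exy' h) eqxx.
  have exx'F : e x x' = false.
    by apply/negbTE/negP => exx'; apply: (tf x x' y') => //; rewrite esy.
  have := inj y x' yx yy' x'x x'y'; rewrite /gfun exy ne1 exx'F /= (Hc y' x') => /(_ cc) h.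
  by move: yx'; rewrite h eqxx.
Qed.
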